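(* Let $\mathrm{Cl}_{p,q}$ be a non-degenerate real Clifford algebra with generators $e_1,\dots,e_n$, $n=p+q$, with extended basis $\mathbf{B}$, multiplication table $\mathbf{M}$, diagonal scalar-product matrix $\mathbf{G}$, coefficient maps $C_S$ and canonical matrix map $\pi$ as defined below. Define $g$ as left multiplication by $\mathbf{G}$, $g(\mathbf{X})=\mathbf{G}\mathbf{X}$. Then for every fixed multi-index $S$ (i.e. $e_S\in\mathbf{B}$), \[ \pi(e_S)=C_S(g(\mathbf{M}))=g(C_S(\mathbf{M})), \] i.e. $\pi=C_S\circ g=g\circ C_S$ on $\mathbf{M}$. Furthermore, $\pi$ (extended linearly) is an isomorphism of $\mathrm{Cl}_{p,q}$ onto its image in $\mathbf{Mat}_{\mathbb{R}}(2^n\times 2^n)$, with inverse $\pi^{-1}$ on that image, thereby inducing a representation of $\mathrm{Cl}_{p,q}$ in the real matrix algebra $\mathbf{Mat}_{\mathbb{R}}(2^n\times 2^n)$.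
   Context: Generators satisfy $e_ie_j=-e_je_i$ ($i\ne j$) and $e_i^2=\sigma_i\in\{1,-1\}$. For $S=(s_1<\dots<s_m)\subseteq\{1,\dots,n\}$, $e_S=e_{s_1}\cdots e_{s_m}$, $e_\emptyset=1$. $\mathbf{B}$ is the list of all $2^n$ blades ordered by a fixed total order $\prec$ extending $e_i\prec e_j$ for $i<j$, with $1$ first. For blades, $e_Me_N=m_{MN}e_{M\triangle N}$ with $m_{MN}\in\{\pm1\}$; $\mathbf{M}=(e_Me_N)_{M,N}$ is the $2^n\times2^n$ multiplication table (entries in the algebra). $C_S$ acts entrywise on such arrays, sending $x\,e_U$ to $x$ if $U=S$ and to $0$ otherwise. $\mathbf{G}=\mathrm{diag}(\sigma_M)$ with $\sigma_M=\langle e_Me_M\rangle_0\in\{\pm1\}$. The canonical matrix map is $\pi(e_S)=\mathbf{E}_S:=\mathbf{G}\,C_S(\mathbf{M})$, extended linearly. *)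

(* Defs.v *)
From HB Require Import structures.
From mathcomp Require Import all_boot all_order all_algebra.
From mathcomp Require Import reals.
Set Implicit Arguments. Unset Strict Implicit. Unset Printing Implicit Defensive.
Import Order.TTheory GRing.Theory Num.Theory.
Local Open Scope ring_scope.

Section Clifford.
Variables (R : realType) (p q : nat).
Local Notation n := (p + q)%N.

(* e_i^2 = sigma_i : +1 for the first p generators, -1 for the last q. *)
Definition sigma (i : 'I_n) : R := if (i < p)%N then 1 else -1.

(* Elements of Cl_{p,q}: real coefficient vectors indexed by multi-indices
   S ⊆ {1..n} (here subsets of 'I_n); x S is the coefficient of e_S. *)
Local Notation Cl := {ffun {set 'I_n} -> R}.

Definition blade (S : {set 'I_n}) : Cl := [ffun T => (T == S)%:R].

Definition symdiff (M N : {set 'I_n}) : {set 'I_n} := (M :\: N) :|: (N :\: M).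

(* e_M e_N = m_MN e_{M Δ N}: reorder generators (one sign per inversion)
   and contract repeated generators using e_i^2 = sigma_i. *)
Definition msign (M N : {set 'I_n}) : R :=
  (-1) ^+ #|[set ij : 'I_n * 'I_n | [&& ij.1 \in M, ij.2 \in N & (ij.2 < ij.1)%N]]|
  * \prod_(i in M :&: N) sigma i.

Definition clmul (x y : Cl) : Cl :=
  [ffun T => \sum_(M : {set 'I_n}) \sum_(N : {set 'I_n} | symdiff M N == T)
               x M * y N * msign M N].

Definition coef (S : {set 'I_n}) (x : Cl) : R := x S.

Definition sigmaB (M : {set 'I_n}) : R := coef set0 (clmul (blade M) (blade M)).

(* An ordering of the blades: e i is the i-th blade of the list B. *)
Definition blade_order (e : 'I_(2 ^ n) -> {set 'I_n}) : Prop :=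
  [/\ bijective e,
      (forall k, (e k == set0) = (val k == 0%N)) &
      (forall (i j : 'I_n) (a b : 'I_(2 ^ n)),
          (i < j)%N -> e a = [set i] -> e b = [set j] -> (a < b)%N)].

Variable e : 'I_(2 ^ n) -> {set 'I_n}.

Definition Mtab : 'M[Cl]_(2 ^ n) := \matrix_(i, j) clmul (blade (e i)) (blade (e j)).

Definition CS (S : {set 'I_n}) (X : 'M[Cl]_(2 ^ n)) : 'M[R]_(2 ^ n) :=
  map_mx (coef S) X.

Definition Gmx : 'M[R]_(2 ^ n) := diag_mx (\row_i sigmaB (e i)).

Definition gCl (X : 'M[Cl]_(2 ^ n)) : 'M[Cl]_(2 ^ n) :=
  \matrix_(i, j) [ffun T => \sum_k Gmx i k * X k j T].
Definition gR (X : 'M[R]_(2 ^ n)) : 'M[R]_(2 ^ n) := Gmx *m X.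

Definition Emx (S : {set 'I_n}) : 'M[R]_(2 ^ n) := Gmx *m CS S Mtab.
Definition clrep (x : Cl) : 'M[R]_(2 ^ n) := \sum_(S : {set 'I_n}) x S *: Emx S.

End Clifford.

(* Main.v *)
Require Import Defs.
From HB Require Import structures.
From mathcomp Require Import all_boot all_order all_algebra.
From mathcomp Require Import reals.
From mathcomp Require Import ring.
Import Order.TTheory GRing.Theory Num.Theory.
Local Open Scope ring_scope.

Section S.
Variables (R : realType) (p q : nat).
Local Notation n := (p + q)%N.
Local Notation Set_ := {set 'I_n}.
Local Notation ms := (@msign R p q).

Definition Sg (M N : Set_) : R :=
  \prod_(ij : 'I_n * 'I_n) (if [&& ij.1 \in M, ij.2 \in N & (ij.2 < ij.1)%N] then -1 else 1).
Definition Pg (M N : Set_) : R :=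
  \prod_(x : 'I_n) (if x \in M :&: N then @sigma R p q x else 1).

Lemma msignE M N : ms M N = Sg M N * Pg M N.
Proof.
rewrite /msign /Sg /Pg; congr (_ * _).
  by rewrite -prodr_const big_mkcond /=; apply: eq_bigr => ij _; rewrite inE.
by rewrite big_mkcond.
Qed.

Lemma cocycle I J K :
  ms J J * ms I J * ms J K =
  ms (symdiff I J) (symdiff J K) * ms I K.
Proof.
rewrite !msignE.
have h1 : Sg J J * Sg I J * Sg J K = Sg (symdiff I J) (symdiff J K) * Sg I K.
  rewrite /Sg -!big_split /=; apply: eq_bigr => [[x y]] _ /=.
  rewrite /symdiff !inE.
  case: (x \in I); case: (x \in J); case: (x \in K); case: (y \in J); case: (y \in K); case: (y < x)%N; rewrite /=; ring.
have h2 : Pg J J * Pg I J * Pg J K = Pg (symdiff I J) (symdiff J K) * Pg I K.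
  rewrite /Pg -!big_split /=; apply: eq_bigr => x _ /=.
  rewrite /symdiff !inE /sigma.
  by case: (x \in I); case: (x \in J); case: (x \in K); case: (x < p)%N;
     rewrite /=; ring.
transitivity ((Sg J J * Sg I J * Sg J K) * (Pg J J * Pg I J * Pg J K)); first ring.
rewrite h1 h2; ring.
Qed.

Lemma msign_sq M N : ms M N * ms M N = 1.
Proof.
rewrite msignE.
have h1 : Sg M N * Sg M N = 1.
  rewrite /Sg -big_split /=; apply: big1 => ij _; case: ifP => _; rewrite ?mulrNN mulr1 //.
have h2 : Pg M N * Pg M N = 1.
  rewrite /Pg -big_split /=; apply: big1 => x _; rewrite /sigma.
  by case: ifP => _; rewrite ?mulr1 //; case: ifP => _; rewrite ?mulrNN mulr1.
transitivity ((Sg M N * Sg M N) * (Pg M N * Pg M N)); first ring.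
by rewrite h1 h2 mulr1.
Qed.

Lemma msign0l N : ms set0 N = 1.
Proof.
rewrite msignE /Sg /Pg !big1 ?mulr1 // => i _; by rewrite ?inE.
Qed.

Lemma symdiffK (A B M : Set_) : (symdiff A B == M) = (B == symdiff A M).
Proof.
apply/eqP/eqP => [<-|->]; apply/setP => x; rewrite /symdiff !inE;
  by case: (x \in A); case: (x \in B); try case: (x \in M).
Qed.

Lemma symdiffA (I J K : Set_) : symdiff (symdiff I J) (symdiff J K) = symdiff I K.
Proof.
apply/setP => x; rewrite /symdiff !inE;
  by case: (x \in I); case: (x \in J); case: (x \in K).
Qed.

Lemma symdiff_eq (A B C D : Set_) : (symdiff A B == symdiff C D) = (symdiff B D == symdiff A C).
Proof.
apply/eqP/eqP => h; apply/setP => x; move/setP: h => /(_ x); rewrite /symdiff !inE;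
  by case: (x \in A); case: (x \in B); case: (x \in C); case: (x \in D).
Qed.

Lemma symdiffvv (A : Set_) : symdiff A A = set0.
Proof. by apply/setP => x; rewrite /symdiff !inE; case: (x \in A). Qed.

Lemma symdiff0l (A : Set_) : symdiff set0 A = A.
Proof. by apply/setP => x; rewrite /symdiff !inE; case: (x \in A). Qed.

Lemma clmul_blade (A B T : Set_) :
  clmul (@blade R p q A) (@blade R p q B) T = if symdiff A B == T then ms A B else 0.
Proof.
rewrite /clmul ffunE (bigD1 A) //= [X in _ + X]big1 ?addr0; last first.
  by move=> M hM; apply: big1 => N _; rewrite !ffunE (negbTE hM) !mul0r.
rewrite big_mkcond (bigD1 B) //= [X in _ + X]big1 ?addr0; last first.
  by move=> N hN; case: ifP => // _; rewrite !ffunE (negbTE hN) !mulr0 mul0r.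
by rewrite !ffunE !eqxx !mul1r; case: ifP.
Qed.

Lemma sigmaBE (M : Set_) : @sigmaB R p q M = ms M M.
Proof. by rewrite /sigmaB /coef clmul_blade symdiffvv eqxx. Qed.


Lemma symdiff_eq2 (I J K N : Set_) :
  (symdiff I K == symdiff (symdiff I J) N) = (symdiff J K == N).
Proof.
apply/eqP/eqP => h; apply/setP => x.
  move/setP: h => /(_ x); rewrite /symdiff !inE;
  by case: (x \in I); case: (x \in J); case: (x \in K); case: (x \in N).
rewrite -h /symdiff !inE;
by case: (x \in I); case: (x \in J); case: (x \in K).
Qed.

Variables (e : 'I_(2 ^ n) -> Set_) (g : Set_ -> 'I_(2 ^ n)).
Hypotheses (eK : cancel e g) (gK : cancel g e).

Local Notation E := (Emx R e).

Lemma EmxE S i j : E S i j =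
  @sigmaB R p q (e i) * (if symdiff (e i) (e j) == S then ms (e i) (e j) else 0).
Proof.
by rewrite /Emx /Gmx mul_diag_mx !mxE /coef clmul_blade.
Qed.

Lemma Emx_mul M N : E M *m E N = ms M N *: E (symdiff M N).
Proof.
apply/matrixP => i k; rewrite mxE [RHS]mxE (bigD1 (g (symdiff (e i) M))) //=.
rewrite [X in _ + X]big1 ?addr0; last first.
  move=> j hj; rewrite EmxE symdiffK.
  case: eqP => [h|]; last by rewrite mulr0 mul0r.
  by move: hj; rewrite -h eK eqxx.
rewrite !EmxE gK.
set I := e i; set J := symdiff I M; set K := e k.
have -> : M = symdiff I J by apply/eqP; rewrite eq_sym symdiffK.
rewrite eqxx symdiff_eq2.
case: eqP => [<-|hN]; last by rewrite !mulr0.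
rewrite !sigmaBE.
transitivity (ms I I * (ms (symdiff I J) (symdiff J K) * ms I K)); last ring.
rewrite -cocycle; ring.
Qed.


Local Notation Cl := {ffun Set_ -> R}.

Lemma clrep_blade S : clrep e (@blade R p q S) = E S.
Proof.
rewrite /clrep (bigD1 S) //= big1 ?addr0 => [|T hT]; first by rewrite ffunE eqxx scale1r.
by rewrite ffunE (negbTE hT) scale0r.
Qed.

Lemma clrep_lin (a : R) (x y : Cl) :
  clrep e [ffun T => a * x T + y T] = a *: clrep e x + clrep e y.
Proof.
rewrite /clrep scaler_sumr -big_split; apply: eq_bigr => S _.
by rewrite ffunE scalerDl scalerA.
Qed.

Lemma symdiff0r (A : Set_) : symdiff A set0 = A.
Proof. by apply/setP => x; rewrite /symdiff !inE; case: (x \in A). Qed.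

Lemma clrep1 : clrep e (@blade R p q set0) = 1%:M.
Proof.
rewrite clrep_blade; apply/matrixP => i j; rewrite EmxE !mxE symdiffK symdiff0r.
rewrite (can_eq eK) eq_sym.
case: eqP => [->|_]; last by rewrite mulr0.
by rewrite sigmaBE msign_sq.
Qed.

Lemma clrep_mul (x y : Cl) : clrep e (clmul x y) = clrep e x *m clrep e y.
Proof.
rewrite /clrep mulmx_suml.
under [RHS]eq_bigr do rewrite mulmx_sumr.
under [RHS]eq_bigr do under eq_bigr do rewrite -scalemxAl -scalemxAr scalerA Emx_mul scalerA.
rewrite /clmul (eq_bigr (fun S => \sum_M \sum_(N | symdiff M N == S)
   (x M * y N * ms M N) *: E S)); last first.
  by move=> S _; rewrite ffunE scaler_suml; apply: eq_bigr => M _; rewrite scaler_suml.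
rewrite exchange_big /=; apply: eq_bigr => M _.
rewrite (exchange_big_dep xpredT) //=; apply: eq_bigr => N _.
by rewrite (big_pred1 (symdiff M N)) // => T; rewrite /= eq_sym.
Qed.

Lemma clrep_entry (x : Cl) k : clrep e x (g set0) k = x (e k).
Proof.
rewrite /clrep summxE.
under eq_bigr do rewrite mxE EmxE gK symdiff0l sigmaBE !msign0l mul1r.
rewrite (bigD1 (e k)) //= eqxx mulr1 big1 ?addr0 // => S hS.
by rewrite eq_sym (negbTE hS) mulr0.
Qed.

Lemma clrep_inj : injective (clrep e : Cl -> _).
Proof.
move=> x y h; apply/ffunP => S; rewrite -(gK S) -!clrep_entry h //.
Qed.

End S.

Theorem theorem2 (R : realType) (p q : nat)
    (e : 'I_(2 ^ (p + q)) -> {set 'I_(p + q)}) :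
  blade_order e ->
  (forall S : {set 'I_(p + q)},
      clrep e (blade R S) = CS S (gCl e (Mtab R e)) /\
      CS S (gCl e (Mtab R e)) = gR e (CS S (Mtab R e))) /\
  [/\ (forall (a : R) (x y : {ffun {set 'I_(p + q)} -> R}), clrep e [ffun T => a * x T + y T] = a *: clrep e x + clrep e y),
      clrep e (blade R set0) = 1%:M,
      (forall x y : {ffun {set 'I_(p + q)} -> R}, clrep e (clmul x y) = clrep e x *m clrep e y) &
      injective (@clrep R p q e)].
Proof.
rewrite /blade_order => -[[g eK gK] _ _]; split.
  move=> S.
  have hE : CS S (gCl e (Mtab R e)) = Emx R e S.
    apply/matrixP => i j; rewrite !mxE /coef ffunE.
    by apply: eq_bigr => k _; rewrite !mxE.
  by rewrite hE clrep_blade.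
split.
- exact: clrep_lin.
- by eapply clrep1; eassumption.
- by move=> x y; eapply clrep_mul; eassumption.
- by eapply clrep_inj; eassumption.
Qed.
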